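(* Let $\mathcal{M}$ be a metric space on $\omega$ whose completion $\mathcal{C}(\mathcal{M})$ is a proper metric space. Let $\alpha$ be an ordinal and let $\bar a,\bar b$ be tuples of elements of $\mathcal{C}(\mathcal{M})$ of the same length $p$. Suppose $(\bar a,\bar b)$ is the limit in $\mathcal{C}(\mathcal{M})^{2p}$ of a sequence $\langle(\bar a_n,\bar b_n):n\in\omega\rangle$ such that $\mathrm{R}(\bar a_n,\bar b_n)>\alpha$ for all $n$. Then $\mathrm{R}(\bar a,\bar b)>\alpha$.
   Context: A metric space is proper if every closed ball $\{y:d(x,y)\le r\}$ is compact. The metric on $\mathcal{C}(\mathcal{M})^k$ is $d(\bar u,\bar v)=\sum_{i<k}d(u_i,v_i)$. $\mathrm{REC}$ is the set of recursive, strictly decreasing $f:\omega\to\mathbb{Q}^+$ converging to $0$. For $f\in\mathrm{REC}$, tuples $\bar a=(a_0,\dots,a_{p-1})$, $\bar b=(b_0,\dots,b_{p-1})$ from $\mathcal{C}(\mathcal{M})$ and an ordinal $\alpha$, the game $G^{f,\bar a,\bar b}_\alpha$: at move $i=0,1,\dots$, Player 1 plays an ordinal $\alpha_i$ with $\alpha_0<\alpha$ and $\alpha_i<\alpha_{i-1}$ for $i>0$, together with an element of $\mathcal{M}$: if $i$ is even Player 1 plays $c_i\in\mathcal{M}$ and Player 2 responds $d_i\in\mathcal{M}$; if $i$ is odd Player 1 plays $d_i\in\mathcal{M}$ and Player 2 responds $c_i\in\mathcal{M}$. The game ends after Player 2 answers the move where $\alpha_{k-1}=0$. Player 2 wins iff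 (I) $|d(a_i,c_j)-d(b_i,d_j)|<f(j)$ for all $i<p$, $j<k$, and (II) $|d(c_i,c_j)-d(d_i,d_j)|<f(i)+f(j)$ for all $i,j<k$. $\bar a\sim^f_\alpha\bar b$ means Player 2 has a winning strategy in $G^{f,\bar a,\bar b}_\alpha$; $\mathrm{R}(\bar a,\bar b)$ is the least ordinal $\mu$ such that $\neg(\bar a\sim^f_\mu\bar b)$ for some $f\in\mathrm{REC}$, or $\infty$ if none. *)

(* Defs.v *)
From Stdlib Require Import Reals QArith Qreals List Arith.
Open Scope R_scope.

Definition is_metric {X : Type} (d : X -> X -> R) : Prop :=
  (forall x y, 0 <= d x y) /\
  (forall x y, d x y = 0 <-> x = y) /\
  (forall x y, d x y = d y x) /\
  (forall x y z, d x z <= d x y + d y z).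

Definition cauchy {X : Type} (d : X -> X -> R) (u : nat -> X) : Prop :=
  forall eps, 0 < eps -> exists N, forall m n, (N <= m)%nat -> (N <= n)%nat ->
    d (u m) (u n) < eps.

Definition converges_to {X : Type} (d : X -> X -> R) (u : nat -> X) (l : X) : Prop :=
  forall eps, 0 < eps -> exists N, forall n, (N <= n)%nat -> d (u n) l < eps.

Definition complete {X : Type} (d : X -> X -> R) : Prop :=
  forall u, cauchy d u -> exists l, converges_to d u l.

Definition is_open {X : Type} (d : X -> X -> R) (U : X -> Prop) : Prop :=
  forall x, U x -> exists e, 0 < e /\ forall y, d x y < e -> U y.

Definition compact {X : Type} (d : X -> X -> R) (K : X -> Prop) : Prop :=
  forall (I : Type) (U : I -> X -> Prop),
    (forall i, is_open d (U i)) ->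
    (forall x, K x -> exists i, U i x) ->
    exists l : list I, forall x, K x -> exists i, In i l /\ U i x.

Definition proper {X : Type} (d : X -> X -> R) : Prop :=
  forall x r, compact d (fun y => d x y <= r).

Definition dense_range {X : Type} (d : X -> X -> R) (iota : nat -> X) : Prop :=
  forall x eps, 0 < eps -> exists i, d x (iota i) < eps.

Definition is_completion {X : Type} (dM : nat -> nat -> R) (dX : X -> X -> R)
  (iota : nat -> X) : Prop :=
  is_metric dX /\ complete dX /\
  (forall i j, dX (iota i) (iota j) = dM i j) /\ dense_range dX iota.

(* a p-tuple of elements of X is represented by a : nat -> X (only i < p matter) *)

Fixpoint sum_lt (p : nat) (g : nat -> R) : R :=
  match p with O => 0 | S q => sum_lt q g + g q end.

Definition pair_tuple_dist {X : Type} (d : X -> X -> R) (p : nat)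
  (a b a' b' : nat -> X) : R :=
  sum_lt p (fun i => d (a i) (a' i)) + sum_lt p (fun i => d (b i) (b' i)).

Definition pair_tuple_limit {X : Type} (d : X -> X -> R) (p : nat)
  (an bn : nat -> nat -> X) (a b : nat -> X) : Prop :=
  forall eps, 0 < eps -> exists N, forall n, (N <= n)%nat ->
    pair_tuple_dist d p (an n) (bn n) a b < eps.

(* Ordinals are represented as elements of an arbitrary well-ordered type. *)
Definition well_order {O : Type} (lt : O -> O -> Prop) : Prop :=
  (forall x, ~ lt x x) /\
  (forall x y z, lt x y -> lt y z -> lt x z) /\
  (forall x y, lt x y \/ x = y \/ lt y x) /\
  well_founded lt.

Definition is_zero {O : Type} (lt : O -> O -> Prop) (z : O) : Prop :=
  forall o, ~ lt o z.

Inductive rcode : Type :=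
| RZero : rcode
| RSucc : rcode
| RProj : nat -> rcode
| RComp : rcode -> list rcode -> rcode
| RPrec : rcode -> rcode -> rcode
| RMin  : rcode -> rcode.

Inductive reval : rcode -> list nat -> nat -> Prop :=
| ev_zero : forall v, reval RZero v 0
| ev_succ : forall x v, reval RSucc (x :: v) (S x)
| ev_proj : forall i v, (i < length v)%nat -> reval (RProj i) v (nth i v 0%nat)
| ev_comp : forall g hs v ys y,
    revals hs v ys -> reval g ys y -> reval (RComp g hs) v y
| ev_prec0 : forall g h v y, reval g v y -> reval (RPrec g h) (0%nat :: v) y
| ev_precS : forall g h n v z y,
    reval (RPrec g h) (n :: v) z -> reval h (n :: z :: v) y ->
    reval (RPrec g h) (S n :: v) y
| ev_min : forall g v n,
    reval g (n :: v) 0%nat ->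
    (forall m, (m < n)%nat -> exists k, reval g (m :: v) (S k)) ->
    reval (RMin g) v n
with revals : list rcode -> list nat -> list nat -> Prop :=
| evs_nil : forall v, revals nil v nil
| evs_cons : forall h hs v y ys,
    reval h v y -> revals hs v ys -> revals (h :: hs) v (y :: ys).

Definition recursive_nat (g : nat -> nat) : Prop :=
  exists e, forall n, reval e (n :: nil) (g n).

Definition recursive_Qpos (f : nat -> Q) : Prop :=
  exists pn qd : nat -> nat, recursive_nat pn /\ recursive_nat qd /\
    forall n, (f n == inject_Z (Z.of_nat (S (pn n))) / inject_Z (Z.of_nat (S (qd n))))%Q.

Definition REC (f : nat -> Q) : Prop :=
  recursive_Qpos f /\
  (forall n, (0 < f n)%Q) /\
  (forall n, (f (S n) < f n)%Q) /\
  (forall eps, (0 < eps)%Q -> exists N, forall n, (N <= n)%nat -> (f n < eps)%Q).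

(* A complete sequence of Player 1's ordinal choices alpha_0 > ... > alpha_{k-1} = 0,
   alpha_0 < alpha. *)
Definition complete_ordinals {O : Type} (lt : O -> O -> Prop) (alpha : O)
  (k : nat) (s : nat -> O) : Prop :=
  (1 <= k)%nat /\ lt (s 0%nat) alpha /\
  (forall i, (0 < i)%nat -> (i < k)%nat -> lt (s i) (s (pred i))) /\
  is_zero lt (s (pred k)).

(* A strategy for Player 2 maps the history of Player 1's moves
   [(alpha_0,x_0); ...; (alpha_i,x_i)] to Player 2's answer at move i. *)
Definition strategy2 (O : Type) := list (O * nat) -> nat.

Definition game_sim {X O : Type} (dX : X -> X -> R) (iota : nat -> X)
  (lt : O -> O -> Prop) (p : nat) (f : nat -> Q) (a b : nat -> X) (alpha : O) : Prop :=
  exists sigma : strategy2 O,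
    forall (k : nat) (s : nat -> O) (x : nat -> nat),
      complete_ordinals lt alpha k s ->
      let y := fun i => sigma (map (fun j => (s j, x j)) (seq 0 (S i))) in
      let c := fun i => if Nat.even i then x i else y i in
      let dd := fun i => if Nat.even i then y i else x i in
      (forall i j, (i < p)%nat -> (j < k)%nat ->
         Rabs (dX (a i) (iota (c j)) - dX (b i) (iota (dd j))) < Q2R (f j)) /\
      (forall i j, (i < k)%nat -> (j < k)%nat ->
         Rabs (dX (iota (c i)) (iota (c j)) - dX (iota (dd i)) (iota (dd j)))
           < Q2R (f i) + Q2R (f j)).

(* R(a,b) > alpha, unfolded: there is no mu <= alpha and f in REC with
   not (a ~^f_mu b), i.e. a ~^f_mu b for all mu <= alpha and all f in REC. *)
Definition R_gt {X O : Type} (dX : X -> X -> R) (iota : nat -> X)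
  (lt : O -> O -> Prop) (p : nat) (a b : nat -> X) (alpha : O) : Prop :=
  forall mu, (lt mu alpha \/ mu = alpha) ->
    forall f, REC f -> game_sim dX iota lt p f a b mu.

(* Main.v *)
Require Import Defs.
From Stdlib Require Import Reals QArith.
From Stdlib Require Import Reals QArith Qreals List Arith Lia Lra Classical ClassicalEpsilon.
Import ListNotations.
Open Scope R_scope.

Lemma abs_le_inv x t : Rabs x <= t -> -t <= x <= t.
Proof. unfold Rabs; destruct Rcase_abs; lra. Qed.
Lemma abs_lt_inv x t : Rabs x < t -> -t < x < t.
Proof. unfold Rabs; destruct Rcase_abs; lra. Qed.
Lemma abs_lt_intro x t : -t < x < t -> Rabs x < t.
Proof. unfold Rabs; destruct Rcase_abs; lra. Qed.

Lemma dist_diff {X} (d : X -> X -> R) x y z w : is_metric d ->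
  Rabs (d x z - d y w) <= d x y + d z w.
Proof.
  intros [H0 [H1 [Hs Ht]]].
  pose proof (Ht x y z). pose proof (Ht y z w). pose proof (Ht y x z).
  pose proof (Ht x w z). pose proof (Ht x y w). pose proof (Hs x y). pose proof (Hs z w).
  unfold Rabs; destruct Rcase_abs; lra.
Qed.

Lemma sum_lt_nonneg p g : (forall i, 0 <= g i) -> 0 <= sum_lt p g.
Proof. intros H; induction p; simpl; [lra|]. pose proof (H p); lra. Qed.

Lemma sum_lt_ge p g i : (forall i, 0 <= g i) -> (i < p)%nat -> g i <= sum_lt p g.
Proof.
  intros H Hi; induction p; [lia|]. simpl.
  destruct (Nat.eq_dec i p).
  - subst. pose proof (sum_lt_nonneg p g H). lra.
  - pose proof (H p). assert (g i <= sum_lt p g) by (apply IHp; lia). lra.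
Qed.

Lemma sinc_ge (psi : nat -> nat) : (forall m, (psi m < psi (S m))%nat) -> forall m, (m <= psi m)%nat.
Proof. intros H m; induction m; [lia|]. pose proof (H m); lia. Qed.

Lemma eventually_all (k : nat) (P : nat -> nat -> Prop) :
  (forall j, (j < k)%nat -> exists M, forall m, (M <= m)%nat -> P j m) ->
  exists M, forall m, (M <= m)%nat -> forall j, (j < k)%nat -> P j m.
Proof.
  induction k; intros H.
  - exists 0%nat; intros; lia.
  - destruct IHk as [M1 HM1]. { intros j hj; apply H; lia. }
    destruct (H k) as [M2 HM2]; [lia|].
    exists (max M1 M2); intros m hm j hj.
    destruct (Nat.eq_dec j k). subst; apply HM2; lia. apply HM1; lia.
Qed.

Lemma cluster {X} (d : X -> X -> R) : is_metric d -> proper d ->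
  forall (u : nat -> X) x0 r M, (forall m, (M <= m)%nat -> d x0 (u m) <= r) ->
  exists z, forall e, 0 < e -> forall N, exists m, (N <= m)%nat /\ d (u m) z < e.
Proof.
  intros Hm Hp u x0 r M Hb.
  destruct Hm as [H0 [H1 [Hs Ht]]].
  apply NNPP; intro Hno.
  assert (H: forall z, exists e, 0 < e /\ exists N, forall m, (N <= m)%nat -> ~ d (u m) z < e).
  { intro z. apply NNPP; intro Hz; apply Hno; exists z; intros e he N.
    apply NNPP; intro H2. apply Hz. exists e; split; auto. exists N; intros m hm hlt; apply H2; exists m; auto. }
  set (I := {z : X & {e : R & {N : nat | 0 < e /\ forall m, (N <= m)%nat -> ~ d (u m) z < e}}}).
  set (U := fun (i : I) y => d (projT1 i) y < projT1 (projT2 i)).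
  destruct (Hp x0 r I U) as [l Hl].
  - intros i y Hy. exists (projT1 (projT2 i) - d (projT1 i) y). split. unfold U in Hy; lra.
    intros w Hw. unfold U in *. pose proof (Ht (projT1 i) y w). lra.
  - intros y Hy. destruct (H y) as [e [he [N HN]]].
    exists (existT _ y (existT _ e (exist _ N (conj he HN)))). unfold U; simpl.
    assert (d y y = 0) by (apply H1; auto). lra.
  - set (Nmax := fold_right (fun (i : I) acc => max (proj1_sig (projT2 (projT2 i))) acc) M l).
    assert (HM : (M <= Nmax)%nat).
    { unfold Nmax; clear Hl; induction l as [|i0 l IH]; simpl; [lia|]. eapply Nat.le_trans; [exact IH| apply Nat.le_max_r]. }
    assert (HN : forall i, In i l -> (proj1_sig (projT2 (projT2 i)) <= Nmax)%nat).
    { unfold Nmax; clear Hl HM; induction l; simpl; intros i Hi; [contradiction|].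
      destruct Hi as [<-|Hi]; [lia|]. specialize (IHl i Hi); lia. }
    destruct (Hl (u Nmax)) as [i [Hi HU]]. apply Hb; auto.
    destruct i as [z [e [N [he HN']]]]. unfold U in HU; simpl in *.
    apply (HN' Nmax). apply (HN _ Hi). rewrite Hs; auto.
Qed.

Lemma subseq_of_cluster {X} (d : X -> X -> R) (u : nat -> X) z :
  (forall e, 0 < e -> forall N, exists m, (N <= m)%nat /\ d (u m) z < e) ->
  exists psi : nat -> nat, (forall m, (psi m < psi (S m))%nat) /\ converges_to d (fun m => u (psi m)) z.
Proof.
  intros H.
  assert (HF : forall N k, exists m, (N <= m)%nat /\ d (u m) z < / INR (S k)).
  { intros N k. apply H. apply Rinv_0_lt_compat, lt_0_INR; lia. }
  pose (F := fun N k => proj1_sig (constructive_indefinite_description _ (HF N k))).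
  assert (HFs : forall N k, (N <= F N k)%nat /\ d (u (F N k)) z < / INR (S k)).
  { intros; unfold F; destruct constructive_indefinite_description; auto. }
  pose (psi := fix psi k := match k with O => F O O | S k' => F (S (psi k')) (S k') end).
  assert (Hd : forall k, d (u (psi k)) z < / INR (S k)).
  { intros [|k]; simpl; apply HFs. }
  exists psi; split.
  - intros m. change (psi (S m)) with (F (S (psi m)) (S m)). apply HFs.
  - intros eps he. destruct (archimed_cor1 eps he) as [N [HN HN0]].
    exists N; intros n hn. eapply Rlt_le_trans; [apply Hd|].
    apply Rlt_le in HN. eapply Rle_trans; [|exact HN].
    apply Rinv_le_contravar. apply lt_0_INR; lia. apply le_INR; lia.
Qed.

Lemma seqcompact {X} (d : X -> X -> R) : is_metric d -> proper d ->
  forall (u : nat -> X) x0 r M, (forall m, (M <= m)%nat -> d x0 (u m) <= r) ->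
  exists pr : (nat -> nat) * X, (forall m, (fst pr m < fst pr (S m))%nat) /\
     converges_to d (fun m => u (fst pr m)) (snd pr).
Proof.
  intros Hm Hp u x0 r M Hb.
  destruct (cluster d Hm Hp u x0 r M Hb) as [z Hz].
  destruct (subseq_of_cluster d u z Hz) as [psi Hpsi].
  exists (psi, z); exact Hpsi.
Qed.

Lemma REC_shift f : REC f -> REC (fun j => f (S j)).
Proof.
  intros [[pn [qd [[e1 He1] [[e2 He2] Heq]]]] [Hpos [Hdec Hlim]]].
  assert (Hs : forall e g, (forall n, reval e [n] (g n)) ->
     forall n, reval (RComp e [RComp RSucc [RProj 0]]) [n] (g (S n))).
  { intros e g He n. eapply ev_comp; [|apply He].
    apply evs_cons; [|apply evs_nil].
    eapply ev_comp. apply evs_cons; [|apply evs_nil]. apply (ev_proj 0 [n]); simpl; lia.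
    apply ev_succ. }
  split; [|split; [|split]].
  - exists (fun n => pn (S n)), (fun n => qd (S n)). split; [|split].
    + exists (RComp e1 [RComp RSucc [RProj 0]]). apply Hs; auto.
    + exists (RComp e2 [RComp RSucc [RProj 0]]). apply Hs; auto.
    + intros n; apply Heq.
  - intros n; apply Hpos.
  - intros n; apply Hdec.
  - intros eps he. destruct (Hlim eps he) as [N HN]. exists N; intros n hn; apply HN; lia.
Qed.
Definition hist {O : Type} (s : nat -> O) (x : nat -> nat) (i : nat) : list (O * nat) :=
  map (fun j => (s j, x j)) (seq 0 (S i)).
Definition ccof {O : Type} (sg : strategy2 O) s x i := if Nat.even i then x i else sg (hist s x i).
Definition ddof {O : Type} (sg : strategy2 O) s x i := if Nat.even i then sg (hist s x i) else x i.

Definition wins {X O : Type} (dX : X -> X -> R) (iota : nat -> X) (p : nat) (f : nat -> Q)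
  (a b : nat -> X) (sg : strategy2 O) (k : nat) (s : nat -> O) (x : nat -> nat) : Prop :=
  (forall i j, (i < p)%nat -> (j < k)%nat ->
     Rabs (dX (a i) (iota (ccof sg s x j)) - dX (b i) (iota (ddof sg s x j))) < Q2R (f j)) /\
  (forall i j, (i < k)%nat -> (j < k)%nat ->
     Rabs (dX (iota (ccof sg s x i)) (iota (ccof sg s x j)) - dX (iota (ddof sg s x i)) (iota (ddof sg s x j)))
       < Q2R (f i) + Q2R (f j)).

Lemma game_sim_iff {X O : Type} (dX : X -> X -> R) iota (lt : O -> O -> Prop) p f a b mu :
  game_sim dX iota lt p f a b mu <->
  exists sg, forall k s x, complete_ordinals lt mu k s -> wins dX iota p f a b sg k s x.
Proof. unfold game_sim, wins, ccof, ddof, hist. split; intros [sg H]; exists sg; exact H. Qed.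

Definition refine {X A : Type} (dX : X -> X -> R) (u : list A -> nat -> X) (x0 : X)
  (phi : nat -> nat) (h : list A) : (nat -> nat) * X :=
  match excluded_middle_informative (exists pr : (nat -> nat) * X,
     (forall m, (fst pr m < fst pr (S m))%nat) /\
     converges_to dX (fun m => u h (phi (fst pr m))) (snd pr)) with
  | left H => proj1_sig (constructive_indefinite_description _ H)
  | right _ => (fun m => m, x0)
  end.

Lemma refine_inc {X A : Type} dX (u : list A -> nat -> X) x0 phi h m :
  (fst (refine dX u x0 phi h) m < fst (refine dX u x0 phi h) (S m))%nat.
Proof.
  unfold refine; destruct (excluded_middle_informative _) as [H|H]; simpl; [|lia].
  destruct constructive_indefinite_description as [pr Hpr]; simpl; apply Hpr.
Qed.

Lemma refine_spec {X A : Type} dX (u : list A -> nat -> X) x0 phi h :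
  (exists pr : (nat -> nat) * X, (forall m, (fst pr m < fst pr (S m))%nat) /\
     converges_to dX (fun m => u h (phi (fst pr m))) (snd pr)) ->
  converges_to dX (fun m => u h (phi (fst (refine dX u x0 phi h) m))) (snd (refine dX u x0 phi h)).
Proof.
  intros E. unfold refine; destruct (excluded_middle_informative _) as [H|H]; [|contradiction].
  destruct constructive_indefinite_description as [pr Hpr]; simpl; apply Hpr.
Qed.

Fixpoint Phi {X A : Type} dX (u : list A -> nat -> X) x0 (rh : list A) : nat -> nat :=
  match rh with
  | [] => fun m => m
  | e :: rh' => fun m => Phi dX u x0 rh' (fst (refine dX u x0 (Phi dX u x0 rh') (rev (e :: rh'))) m)
  end.

Definition Zr {X A : Type} dX (u : list A -> nat -> X) x0 (rh : list A) : X :=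
  match rh with
  | [] => x0
  | e :: rh' => snd (refine dX u x0 (Phi dX u x0 rh') (rev rh))
  end.

Definition tau {X A : Type} dX (iota : nat -> X) (u : list A -> nat -> X) x0 (del : nat -> R)
  (h : list A) : nat :=
  match excluded_middle_informative (exists t, dX (Zr dX u x0 (rev h)) (iota t) < del (pred (length h)) / 2) with
  | left H => proj1_sig (constructive_indefinite_description _ H)
  | right _ => 0%nat
  end.

Lemma tau_spec {X A : Type} dX (iota : nat -> X) (u : list A -> nat -> X) x0 del h :
  dense_range dX iota -> (forall j, 0 < del j) ->
  dX (Zr dX u x0 (rev h)) (iota (tau dX iota u x0 del h)) < del (pred (length h)) / 2.
Proof.
  intros Hd Hp. unfold tau; destruct (excluded_middle_informative _) as [H|H].
  - destruct constructive_indefinite_description; auto.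
  - exfalso; apply H. apply Hd. pose proof (Hp (pred (length h))); lra.
Qed.

Lemma sinc_mono (psi : nat -> nat) : (forall m, (psi m < psi (S m))%nat) ->
  forall m m', (m < m')%nat -> (psi m < psi m')%nat.
Proof. intros H m m' Hm; induction Hm; [apply H|]. pose proof (H m0); lia. Qed.

Lemma Phi_inc {X A : Type} dX (u : list A -> nat -> X) x0 rh m :
  (Phi dX u x0 rh m < Phi dX u x0 rh (S m))%nat.
Proof.
  revert m; induction rh as [|e rh IH]; intros m; simpl; [lia|].
  apply sinc_mono; [exact IH|]. apply refine_inc.
Qed.

Lemma Phi_ge {X A : Type} dX (u : list A -> nat -> X) x0 rh m : (m <= Phi dX u x0 rh m)%nat.
Proof. apply sinc_ge. intros; apply Phi_inc. Qed.

Definition prevr {O : Type} (s : nat -> O) x j : list (O * nat) :=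
  match j with O => [] | S j' => rev (hist s x j') end.

Lemma rev_hist {O : Type} (s : nat -> O) x j : rev (hist s x j) = (s j, x j) :: prevr s x j.
Proof.
  destruct j; unfold hist; [reflexivity|].
  rewrite seq_S, map_app, rev_app_distr. reflexivity.
Qed.

Lemma rev_hist' {O : Type} (s : nat -> O) x j : rev ((s j, x j) :: prevr s x j) = hist s x j.
Proof. rewrite <- rev_hist, rev_involutive; reflexivity. Qed.

Lemma Phi_hist {X O : Type} dX (u : list (O * nat) -> nat -> X) x0 s x j m :
  Phi dX u x0 (rev (hist s x j)) m =
  Phi dX u x0 (prevr s x j) (fst (refine dX u x0 (Phi dX u x0 (prevr s x j)) (hist s x j)) m).
Proof. rewrite rev_hist. cbn [Phi]. rewrite rev_hist'. reflexivity. Qed.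

Lemma Zr_hist {X O : Type} dX (u : list (O * nat) -> nat -> X) x0 s x j :
  Zr dX u x0 (rev (hist s x j)) = snd (refine dX u x0 (Phi dX u x0 (prevr s x j)) (hist s x j)).
Proof. rewrite rev_hist. unfold Zr. rewrite rev_hist'. reflexivity. Qed.

Lemma Phi_factor {X O : Type} dX (u : list (O * nat) -> nat -> X) x0 s x :
  forall d j, exists chi : nat -> nat, (forall m, (m <= chi m)%nat) /\
    forall m, Phi dX u x0 (rev (hist s x (d + j))) m = Phi dX u x0 (rev (hist s x j)) (chi m).
Proof.
  induction d; intros j.
  - exists (fun m => m); split; auto.
  - destruct (IHd j) as [chi [Hc Hf]].
    exists (fun m => chi (fst (refine dX u x0 (Phi dX u x0 (prevr s x (S d + j))) (hist s x (S d + j))) m)).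
    split.
    + intros m. pose proof (Hc (fst (refine dX u x0 (Phi dX u x0 (prevr s x (S d + j))) (hist s x (S d + j))) m)).
      pose proof (sinc_ge _ (refine_inc dX u x0 (Phi dX u x0 (prevr s x (S d + j))) (hist s x (S d + j))) m). lia.
    + intros m. rewrite Phi_hist. rewrite <- Hf. reflexivity.
Qed.

Lemma length_hist {O : Type} (s : nat -> O) x j : pred (length (hist s x j)) = j.
Proof. unfold hist; rewrite length_map, length_seq; reflexivity. Qed.
Theorem fact4p5 :
  forall (dM : nat -> nat -> R) (X : Type) (dX : X -> X -> R) (iota : nat -> X),
    is_metric dM ->
    is_completion dM dX iota ->
    proper dX ->
  forall (O : Type) (lt : O -> O -> Prop), well_order lt ->
  forall (alpha : O) (p : nat) (a b : nat -> X) (an bn : nat -> nat -> X),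
    pair_tuple_limit dX p an bn a b ->
    (forall n, R_gt dX iota lt p (an n) (bn n) alpha) ->
    R_gt dX iota lt p a b alpha.
Proof.
  intros dM X dX iota HdM Hcomp Hprop O lt Hwo alpha p a b an bn Hlim Hn mu Hmu f Hf.
  destruct Hcomp as [Hmet [_ [_ Hdense]]].
  pose proof Hmet as [Hd0 [Hd1 [Hds Hdt]]].
  destruct (Nat.eq_dec p 0) as [Hp0|Hp0].
  { apply game_sim_iff. destruct (proj1 (game_sim_iff _ _ _ _ _ _ _ _) (Hn 0%nat mu Hmu f Hf)) as [sg Hsg].
    exists sg; intros k s x Hc. destruct (Hsg k s x Hc) as [_ H2]. split; [intros; lia | exact H2]. }
  pose (g := fun j => f (S j)).
  assert (HgR : REC g) by (apply REC_shift; auto).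
  assert (Hg : forall n, exists sg, forall k s x, complete_ordinals lt mu k s ->
                  wins dX iota p g (an n) (bn n) sg k s x).
  { intro n; apply game_sim_iff; apply Hn; auto. }
  pose (sig := fun n => proj1_sig (constructive_indefinite_description _ (Hg n))).
  assert (Hsig : forall n k s x, complete_ordinals lt mu k s -> wins dX iota p g (an n) (bn n) (sig n) k s x).
  { intros n; unfold sig; destruct constructive_indefinite_description; auto. }
  pose (u := fun (h : list (O * nat)) n => iota (sig n h)).
  pose (x0 := iota 0%nat).
  pose (del := fun j => (Q2R (f j) - Q2R (f (S j))) / 4).
  assert (Hdel : forall j, 0 < del j).
  { intros j; unfold del. destruct Hf as [_ [_ [Hdec _]]]. pose proof (Qlt_Rlt _ _ (Hdec j)). lra. }
  assert (Hfg : forall j, Q2R (f j) = Q2R (g j) + 4 * del j) by (intros; unfold del, g; lra).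
  assert (Hpd : forall n i, (i < p)%nat -> dX (an n i) (a i) <= pair_tuple_dist dX p (an n) (bn n) a b
                 /\ dX (bn n i) (b i) <= pair_tuple_dist dX p (an n) (bn n) a b).
  { intros n i hi. unfold pair_tuple_dist.
    pose proof (sum_lt_ge p (fun i => dX (an n i) (a i)) i (fun i => Hd0 _ _) hi).
    pose proof (sum_lt_ge p (fun i => dX (bn n i) (b i)) i (fun i => Hd0 _ _) hi).
    pose proof (sum_lt_nonneg p (fun i => dX (an n i) (a i)) (fun i => Hd0 _ _)).
    pose proof (sum_lt_nonneg p (fun i => dX (bn n i) (b i)) (fun i => Hd0 _ _)).
    simpl in *. lra. }
  apply game_sim_iff. exists (tau dX iota u x0 del). intros k s x Hc.
  destruct (Hlim 1 Rlt_0_1) as [N1 HN1].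
  assert (Hex : forall j, (j < k)%nat ->
     converges_to dX (fun m => u (hist s x j) (Phi dX u x0 (rev (hist s x j)) m)) (Zr dX u x0 (rev (hist s x j)))).
  { intros j hj.
    assert (E : exists pr : (nat -> nat) * X, (forall m, (fst pr m < fst pr (S m))%nat) /\
       converges_to dX (fun m => u (hist s x j) (Phi dX u x0 (prevr s x j) (fst pr m))) (snd pr)).
    { assert (Hb : forall n, (N1 <= n)%nat ->
         dX (if Nat.even j then b 0%nat else a 0%nat) (u (hist s x j) n) <=
         2 + (if Nat.even j then dX (a 0%nat) (iota (x j)) else dX (b 0%nat) (iota (x j))) + Q2R (g j)).
      { intros n hn. destruct (Hsig n k s x Hc) as [H1 _].
        specialize (H1 0%nat j ltac:(lia) hj). specialize (HN1 n hn).
        destruct (Hpd n 0%nat ltac:(lia)) as [Ha Hb].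
        apply abs_lt_inv in H1. unfold ccof, ddof, u in *.
        destruct (Nat.even j).
        - pose proof (Hdt (b 0%nat) (bn n 0%nat) (iota (sig n (hist s x j)))).
          pose proof (Hdt (an n 0%nat) (a 0%nat) (iota (x j))).
          pose proof (Hds (b 0%nat) (bn n 0%nat)). lra.
        - pose proof (Hdt (a 0%nat) (an n 0%nat) (iota (sig n (hist s x j)))).
          pose proof (Hdt (bn n 0%nat) (b 0%nat) (iota (x j))).
          pose proof (Hds (a 0%nat) (an n 0%nat)). lra. }
      apply (seqcompact dX Hmet Hprop (fun m => u (hist s x j) (Phi dX u x0 (prevr s x j) m)) (if Nat.even j then b 0%nat else a 0%nat) (2 + (if Nat.even j then dX (a 0%nat) (iota (x j)) else dX (b 0%nat) (iota (x j))) + Q2R (g j)) N1).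
      intros m hm. apply Hb. pose proof (Phi_ge dX u x0 (prevr s x j) m). lia. }
    intros eps he. destruct (refine_spec dX u x0 _ _ E eps he) as [M HM].
    exists M; intros m hm. rewrite Phi_hist, Zr_hist. apply HM; auto. }
  set (K := pred k).
  assert (Hev : exists M, forall m, (M <= m)%nat -> forall j, (j < k)%nat ->
     pair_tuple_dist dX p (an (Phi dX u x0 (rev (hist s x K)) m)) (bn (Phi dX u x0 (rev (hist s x K)) m)) a b < del j /\
     dX (u (hist s x j) (Phi dX u x0 (rev (hist s x K)) m)) (Zr dX u x0 (rev (hist s x j))) < del j / 2).
  { apply eventually_all. intros j hj.
    destruct (Hlim (del j) (Hdel j)) as [N2 HN2].
    assert (hd : (0 < del j / 2)) by (pose proof (Hdel j); lra).
    destruct (Hex j hj (del j / 2) hd) as [M HM].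
    destruct (Phi_factor dX u x0 s x (K - j) j) as [chi [Hchi Hchi']].
    replace (K - j + j)%nat with K in Hchi' by (unfold K; lia).
    exists (max N2 M). intros m hm. rewrite Hchi'. split.
    - apply HN2. rewrite <- Hchi'. pose proof (Phi_ge dX u x0 (rev (hist s x K)) m). lia.
    - apply HM. pose proof (Hchi m). lia. }
  destruct Hev as [M HM].
  set (n := Phi dX u x0 (rev (hist s x K)) M).
  assert (HMn := HM M (le_n _)). fold n in HMn.
  assert (Hclose : forall j, (j < k)%nat ->
     dX (iota (ccof (tau dX iota u x0 del) s x j)) (iota (ccof (sig n) s x j)) +
     dX (iota (ddof (tau dX iota u x0 del) s x j)) (iota (ddof (sig n) s x j)) < del j).
  { intros j hj. destruct (HMn j hj) as [_ H2].
    pose proof (tau_spec dX iota u x0 del (hist s x j) Hdense Hdel) as Ht.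
    rewrite length_hist in Ht. unfold ccof, ddof.
    set (T := tau dX iota u x0 del (hist s x j)) in *.
    set (Z := Zr dX u x0 (rev (hist s x j))) in *. unfold u in H2.
    pose proof (Hdt (iota T) Z (iota (sig n (hist s x j)))).
    pose proof (Hds (iota T) Z). pose proof (Hds (iota (sig n (hist s x j))) Z).
    destruct (Nat.even j).
    - assert (dX (iota (x j)) (iota (x j)) = 0) by (apply Hd1; auto). lra.
    - assert (dX (iota (x j)) (iota (x j)) = 0) by (apply Hd1; auto). lra. }
  destruct (Hsig n k s x Hc) as [W1 W2].
  split.
  - intros i j hi hj. specialize (W1 i j hi hj). apply abs_lt_inv in W1.
    destruct (HMn j hj) as [Hpn _]. destruct (Hpd n i hi) as [Ha Hb].
    pose proof (Hclose j hj) as Hcl.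
    pose proof (dist_diff dX (a i) (an n i) (iota (ccof (tau dX iota u x0 del) s x j)) (iota (ccof (sig n) s x j)) Hmet) as D1.
    pose proof (dist_diff dX (b i) (bn n i) (iota (ddof (tau dX iota u x0 del) s x j)) (iota (ddof (sig n) s x j)) Hmet) as D2.
    apply abs_le_inv in D1. apply abs_le_inv in D2.
    pose proof (Hds (a i) (an n i)). pose proof (Hds (b i) (bn n i)).
    pose proof (Hfg j). pose proof (Hdel j).
    apply abs_lt_intro. lra.
  - intros i j hi hj. specialize (W2 i j hi hj). apply abs_lt_inv in W2.
    pose proof (Hclose i hi). pose proof (Hclose j hj).
    set (t := tau dX iota u x0 del) in *.
    pose proof (dist_diff dX (iota (ccof t s x i)) (iota (ccof (sig n) s x i)) (iota (ccof t s x j)) (iota (ccof (sig n) s x j)) Hmet) as D1.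
    pose proof (dist_diff dX (iota (ddof t s x i)) (iota (ddof (sig n) s x i)) (iota (ddof t s x j)) (iota (ddof (sig n) s x j)) Hmet) as D2.
    apply abs_le_inv in D1. apply abs_le_inv in D2.
    pose proof (Hfg i). pose proof (Hfg j). pose proof (Hdel i). pose proof (Hdel j).
    apply abs_lt_intro. lra.
Qed.
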